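(* Let $m$ and $n$ be positive integers. A layer-rainbow latin cube of order $m$ can be extended to (i.e., embedded as the $m\times m\times m$ subarray on the first $m$ indices in each coordinate of) a layer-rainbow latin cube of order $n$ if and only if $n\geq 2m$.
   Context: An $n\times n\times n$ array $L$ has cells indexed by triples $(i,j,k)$ with $i,j,k\in\{1,\dots,n\}$. A layer of $L$ is the set of cells obtained by fixing one coordinate (so there are $3n$ layers, each containing $n^2$ cells). $L$ is a layer-rainbow latin cube of order $n$ if each cell is filled with one of $n^2$ symbols such that every layer contains every symbol exactly once. A layer-rainbow latin cube $M$ of order $m$ is extended to a layer-rainbow latin cube $L$ of order $n$ if $L$ restricted to the cells $\{1,\dots,m\}^3$ coincides with $M$ (the $m^2$ symbols of $M$ being among the $n^2$ symbols of $L$). *)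

(* Defs.v *)
From mathcomp Require Import all_boot.
Set Implicit Arguments. Unset Strict Implicit. Unset Printing Implicit Defensive.

Definition cube (n : nat) := 'I_n -> 'I_n -> 'I_n -> 'I_(n ^ 2).

Definition layer_rainbow (n : nat) (L : cube n) : Prop :=
  forall (a : 'I_n) (s : 'I_(n ^ 2)),
    [/\ #|[set p : 'I_n * 'I_n | L a p.1 p.2 == s]| = 1,
        #|[set p : 'I_n * 'I_n | L p.1 a p.2 == s]| = 1 &
        #|[set p : 'I_n * 'I_n | L p.1 p.2 a == s]| = 1].

Definition extends_to (m n : nat) (M : cube m) (L : cube n) : Prop :=
  exists f : 'I_(m ^ 2) -> 'I_(n ^ 2), injective f /\
    forall (i j k : 'I_m) (i' j' k' : 'I_n),
      val i = val i' -> val j = val j' -> val k = val k' ->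
      L i' j' k' = f (M i j k).

Definition extendable (m n : nat) (M : cube m) : Prop :=
  exists L : cube n, layer_rainbow L /\ extends_to M L.

(* Main.v *)
Require Import Defs.
From mathcomp Require Import all_boot.
From mathcomp Require Import zify.
Set Implicit Arguments. Unset Strict Implicit. Unset Printing Implicit Defensive.

Definition addm (r a b : nat) := if a + b < r then a + b else a + b - r.
Definition kk r s := if s == 0 then 0 else r - s.
Definition posS c s := (1 <= s) && (s <= c).
Definition negS r q c s := (kk r s <= c) && (2*c < kk r s + q).
Definition inS r q c s := posS c s || negS r q c s.
Definition aS r c s := if posS c s then s - 1 else 2*c - kk r s.
Definition bS r c s := if posS c s then 2*s - 1 else 2*c - 2 * kk r s.
Definition hA m c s := if s == 0 then m - 1 else s - c - 1.

Ltac revert_props := repeat match goal with H : ?P |- _ => lazymatch type of P with Prop => revert H end end.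
Ltac crush := repeat match goal with
 | |- context[if ?b then _ else _] => lazymatch b with context[if _ then _ else _] => fail | _ => case: (boolP b) => ? end
 end; lia.


Lemma sig1 r q c m s : q + m = r -> 2*c <= q <= 2*c+1 -> 0 < m -> s < r ->
  inS r q c s -> [/\ aS r c s < q, bS r c s < q & addm r (aS r c s) s = bS r c s].
Proof. rewrite /inS /aS /bS /addm /posS /negS /kk => h1 h2 h3 h4 h5; split; move: h1 h2 h3 h4 h5; crush. Qed.

Lemma sig_a_inj r q c m s1 s2 : q + m = r -> 2*c <= q <= 2*c+1 -> 0 < m -> s1 < r -> s2 < r ->
  inS r q c s1 -> inS r q c s2 -> aS r c s1 = aS r c s2 -> s1 = s2.
Proof. rewrite /inS /aS /bS /addm /posS /negS /kk ; crush. Qed.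

Lemma sig_b_inj r q c m s1 s2 : q + m = r -> 2*c <= q <= 2*c+1 -> 0 < m -> s1 < r -> s2 < r ->
  inS r q c s1 -> inS r q c s2 -> bS r c s1 = bS r c s2 -> s1 = s2.
Proof. rewrite /inS /aS /bS /addm /posS /negS /kk ; crush. Qed.

Lemma sig_h r q c m s : q + m = r -> 2*c <= q <= 2*c+1 -> 0 < m -> s < r ->
  ~~ inS r q c s -> hA m c s < m.
Proof. rewrite /inS /hA /addm /posS /negS /kk ; crush. Qed.

Lemma sig_h_inj r q c m s1 s2 : q + m = r -> 2*c <= q <= 2*c+1 -> 0 < m -> s1 < r -> s2 < r ->
  ~~ inS r q c s1 -> ~~ inS r q c s2 -> hA m c s1 = hA m c s2 -> s1 = s2.
Proof. rewrite /inS /hA /addm /posS /negS /kk ; crush. Qed.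


Definition BB m r q c t t' := let s := addm r t t' in
  if inS r q c s then m + addm r t (aS r c s) else hA m c s.

Lemma addm_lt r a b : a < r -> b < r -> addm r a b < r.
Proof. rewrite /addm; crush. Qed.

Ltac prep m r q c hr hc hm E1 E2 s1 s2 hs1 hs2 in1 in2 :=
  case: (boolP (inS r q c s1)) => in1; case: (boolP (inS r q c s2)) => in2;
  rewrite ?in1 ?in2 ?(negbTE in1) ?(negbTE in2);
  [ have [? ? ?] := sig1 hr hc hm hs1 in1; have [? ? ?] := sig1 hr hc hm hs2 in2;
    have := sig_a_inj hr hc hm hs1 hs2 in1 in2; have := sig_b_inj hr hc hm hs1 hs2 in1 in2
  | have [? ? ?] := sig1 hr hc hm hs1 in1; have := sig_h hr hc hm hs2 in2
  | have := sig_h hr hc hm hs1 in1; have [? ? ?] := sig1 hr hc hm hs2 in2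
  | have := sig_h hr hc hm hs1 in1; have := sig_h hr hc hm hs2 in2;
    have := sig_h_inj hr hc hm hs1 hs2 in1 in2 ];
  revert_props;
  move: (aS r c s1) (aS r c s2) (bS r c s1) (bS r c s2) (hA m c s1) (hA m c s2) => ? ? ? ? ? ?;
  rewrite /addm; crush.

Lemma BB_row m r q c t t1 t2 : q + m = r -> 2*c <= q <= 2*c+1 -> 0 < m ->
  t < r -> t1 < r -> t2 < r -> BB m r q c t t1 = BB m r q c t t2 -> t1 = t2.
Proof.
move=> hr hc hm ht ht1 ht2; rewrite /BB.
move E1: (addm r t t1) => s1; move E2: (addm r t t2) => s2.
have hs1 : s1 < r by rewrite -E1 addm_lt.
have hs2 : s2 < r by rewrite -E2 addm_lt.
prep m r q c hr hc hm E1 E2 s1 s2 hs1 hs2 in1 in2.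
Qed.

Lemma BB_col m r q c t1 t2 t : q + m = r -> 2*c <= q <= 2*c+1 -> 0 < m ->
  t < r -> t1 < r -> t2 < r -> BB m r q c t1 t = BB m r q c t2 t -> t1 = t2.
Proof.
move=> hr hc hm ht ht1 ht2; rewrite /BB.
move E1: (addm r t1 t) => s1; move E2: (addm r t2 t) => s2.
have hs1 : s1 < r by rewrite -E1 addm_lt.
have hs2 : s2 < r by rewrite -E2 addm_lt.
prep m r q c hr hc hm E1 E2 s1 s2 hs1 hs2 in1 in2.
Qed.

Ltac prep1 m r q c hr hc hm s1 hs1 in1 :=
  case: (boolP (inS r q c s1)) => in1;
  rewrite ?in1 ?(negbTE in1);
  [ have [? ? ?] := sig1 hr hc hm hs1 in1
  | have := sig_h hr hc hm hs1 in1 ];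
  revert_props;
  move: (aS r c s1) (bS r c s1) (hA m c s1) => ? ? ?;
  rewrite /addm; crush.

Lemma BB_BA m r q c t t' i : q + m = r -> 2*c <= q <= 2*c+1 -> 0 < m ->
  t < r -> t' < r -> i < m -> BB m r q c t t' <> m + addm r t (q + i).
Proof.
move=> hr hc hm ht ht' hi; rewrite /BB.
move E1: (addm r t t') => s1.
have hs1 : s1 < r by rewrite -E1 addm_lt.
prep1 m r q c hr hc hm s1 hs1 in1.
Qed.

Lemma BB_AB m r q c t t' x : q + m = r -> 2*c <= q <= 2*c+1 -> 0 < m ->
  t < r -> t' < r -> x < m -> BB m r q c t t' <> m + addm r (q + x) (r - t').
Proof.
move=> hr hc hm ht ht' hi; rewrite /BB.
move E1: (addm r t t') => s1.
have hs1 : s1 < r by rewrite -E1 addm_lt.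
prep1 m r q c hr hc hm s1 hs1 in1.
Qed.

Lemma BB_lt m r q c t t' : q + m = r -> 2*c <= q <= 2*c+1 -> 0 < m ->
  t < r -> t' < r -> BB m r q c t t' < m + r.
Proof.
move=> hr hc hm ht ht'; rewrite /BB.
move E1: (addm r t t') => s1.
have hs1 : s1 < r by rewrite -E1 addm_lt.
prep1 m r q c hr hc hm s1 hs1 in1.
Qed.


Definition Fl m r q c x i :=
  if x < m then (if i < m then addm m x i else m + addm r (q + x) (r - (i - m)))
  else if i < m then m + addm r (x - m) (q + i) else BB m r q c (x - m) (i - m).

Ltac finF := revert_props; try (move: (BB _ _ _ _ _ _) => ?); try (move: (BB _ _ _ _ _ _) => ?); rewrite /addm; crush.

Lemma F_lt m r q c x i : q + m = r -> 2*c <= q <= 2*c+1 -> 0 < m ->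
  x < m + r -> i < m + r -> Fl m r q c x i < m + r.
Proof.
move=> hr hc hm hx hi; rewrite /Fl; case: ifP => hxm; case: ifP => him.
all: try (have := BB_lt hr hc hm (_ : x - m < r) (_ : i - m < r)).
all: finF.
Qed.

Lemma F_row m r q c x i i' : q + m = r -> 2*c <= q <= 2*c+1 -> 0 < m ->
  x < m + r -> i < m + r -> i' < m + r -> Fl m r q c x i = Fl m r q c x i' -> i = i'.
Proof.
move=> hr hc hm hx hi hi'; rewrite /Fl; case: ifP => hxm; case: ifP => him; case: ifP => him'.
all: try finF.
- have := BB_BA hr hc hm (_ : x - m < r) (_ : i' - m < r) (_ : i < m); finF.
- have := BB_BA hr hc hm (_ : x - m < r) (_ : i - m < r) (_ : i' < m); finF.
- move/(BB_row hr hc hm) => h; have := h (_ : x - m < r) (_ : i - m < r) (_ : i' - m < r); finF.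
Qed.

Lemma F_col m r q c x x' i : q + m = r -> 2*c <= q <= 2*c+1 -> 0 < m ->
  x < m + r -> x' < m + r -> i < m + r -> Fl m r q c x i = Fl m r q c x' i -> x = x'.
Proof.
move=> hr hc hm hx hx' hi; rewrite /Fl; case: ifP => hxm; case: ifP => him; case: (ifP (x' < m)) => hxm'.
all: try finF.
- have := BB_AB hr hc hm (_ : x' - m < r) (_ : i - m < r) (_ : x < m); finF.
- have := BB_AB hr hc hm (_ : x - m < r) (_ : i - m < r) (_ : x' < m); finF.
- move/(BB_col hr hc hm) => h; have := h (_ : i - m < r) (_ : x - m < r) (_ : x' - m < r); finF.
Qed.

Lemma F_AA m r q c x i : x < m -> i < m -> Fl m r q c x i < m.
Proof. move=> hx hi; rewrite /Fl hx hi /addm; crush. Qed.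
Lemma F_AB m r q c x i : x < m -> m <= i -> m <= Fl m r q c x i.
Proof. move=> hx hi; rewrite /Fl hx ltnNge hi /=; lia. Qed.
Lemma F_BA m r q c x i : m <= x -> i < m -> m <= Fl m r q c x i.
Proof. move=> hx hi; rewrite /Fl hi ltnNge hx /=; lia. Qed.

Definition Fn m n x i := Fl m (n-m) (n-m-m) ((n-m-m) %/ 2) x i.

Lemma decode (x y x' y' n: nat) : y < n -> y' < n -> x * n + y = x' * n + y' -> x = x' /\ y = y'.
Proof. move=> h1 h2 e.
have [lt|lt|eq] := ltngtP x x'.
- have : x.+1 * n <= x' * n by rewrite leq_mul2r lt orbT. lia.
- have : x'.+1 * n <= x * n by rewrite leq_mul2r lt orbT. lia.
- subst; lia.
Qed.

Lemma code_lt x y n : x < n -> y < n -> x * n + y < n ^ 2.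
Proof. move=> hx hy. have : x.+1 * n <= n * n by rewrite leq_mul2r hx orbT. rewrite -mulnn. lia. Qed.

Definition fnat m n (s : nat) := s %/ m * n + s %% m.

Lemma fnat_lt m n s : 0 < m -> m <= n -> s < m ^ 2 -> fnat m n s < n ^ 2.
Proof.
move=> hm hmn hs; apply: code_lt.
- have : s %/ m < m by rewrite ltn_divLR // mulnn. lia.
- have := ltn_pmod s hm; lia.
Qed.

Lemma fnat_dec m s : 0 < m -> s < m ^ 2 -> s %/ m < m /\ s %% m < m.
Proof. move=> hm hs; split; last exact: ltn_pmod. by rewrite ltn_divLR // mulnn. Qed.

Lemma fnat_inj m n s s' : 0 < m -> m <= n -> s < m ^ 2 -> s' < m ^ 2 -> fnat m n s = fnat m n s' -> s = s'.
Proof.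
move=> hm hmn hs hs' e.
have h1 : s %% m < n by have := ltn_pmod s hm; lia.
have h2 : s' %% m < n by have := ltn_pmod s' hm; lia.
have [e1 e2] := decode h1 h2 e.
by rewrite (divn_eq s m) (divn_eq s' m) e1 e2.
Qed.



Lemma Fn_facts m n : 0 < m -> 2 * m <= n ->
  [/\ forall x i, x < n -> i < n -> Fn m n x i < n,
      forall x i i', x < n -> i < n -> i' < n -> Fn m n x i = Fn m n x i' -> i = i',
      forall x x' i, x < n -> x' < n -> i < n -> Fn m n x i = Fn m n x' i -> x = x',
      forall x i, x < m -> m <= i -> m <= Fn m n x i &
      forall x i, m <= x -> i < m -> m <= Fn m n x i].
Proof.
move=> hm hn.
have hr : (n - m - m) + m = n - m by lia.
have hc : 2 * ((n-m-m) %/ 2) <= n - m - m <= 2 * ((n-m-m) %/ 2) + 1 by lia.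
have hnn : n = m + (n - m) by lia.
rewrite /Fn; split.
- move=> x i hx hi; rewrite [X in _ < X]hnn; apply: F_lt => //; lia.
- move=> x i i' hx hi hi'; apply: F_row => //; lia.
- move=> x x' i hx hx' hi; apply: F_col => //; lia.
- move=> x i; exact: F_AB.
- move=> x i; exact: F_BA.
Qed.

Lemma Fn_AA m n x i : x < m -> i < m -> Fn m n x i < m.
Proof. exact: F_AA. Qed.

Definition castm m (Hm : 0 < m) (x : nat) : 'I_m := insubd (Ordinal Hm) x.

Lemma castmK m (Hm : 0 < m) x : x < m -> val (castm Hm x) = x.
Proof. by move=> h; rewrite /castm val_insubd h. Qed.

Lemma castmV m (Hm : 0 < m) (i : 'I_m) : castm Hm (val i) = i.
Proof. exact: valKd. Qed.

Definition Lnat m n (Hm : 0 < m) (M : cube m) (i j k : nat) : nat :=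
  if (i < m) && (j < m) && (k < m) then fnat m n (M (castm Hm i) (castm Hm j) (castm Hm k))
  else Fn m n i j * n + Fn m n i k.

Definition Lc m n (Hm : 0 < m) (Hn : 0 < n ^ 2) (M : cube m) : cube n :=
  fun i j k => insubd (Ordinal Hn) (Lnat n Hm M i j k).

Lemma rb_inj (T : finType) (A : {set T}) x y : #|A| = 1 -> x \in A -> y \in A -> x = y.
Proof. move=> /mem_card1 [z hz]; rewrite !hz => /eqP -> /eqP ->. by []. Qed.

Lemma inj_rb n (g : 'I_n * 'I_n -> 'I_(n^2)) : injective g -> forall s, #|[set p | g p == s]| = 1.
Proof.
move=> gi s.
have : s \in codom g by apply: inj_card_onto => //; rewrite card_prod !card_ord mulnn.
case/codomP => p ->.
transitivity #|[set p]|; last exact: cards1.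
by apply: eq_card => p'; rewrite !inE (inj_eq gi).
Qed.

Lemma M_inj1 m (M : cube m) : layer_rainbow M -> forall a j k j' k', M a j k = M a j' k' -> j = j' /\ k = k'.
Proof.
move=> H a j k j' k' e. have [h1 _ _] := H a (M a j k).
have := rb_inj (x := (j,k)) (y := (j',k')) h1. rewrite !inE /= e eqxx => /(_ erefl erefl). by case.
Qed.
Lemma M_inj2 m (M : cube m) : layer_rainbow M -> forall a j k j' k', M j a k = M j' a k' -> j = j' /\ k = k'.
Proof.
move=> H a j k j' k' e. have [_ h1 _] := H a (M j a k).
have := rb_inj (x := (j,k)) (y := (j',k')) h1. rewrite !inE /= e eqxx => /(_ erefl erefl). by case.
Qed.
Lemma M_inj3 m (M : cube m) : layer_rainbow M -> forall a j k j' k', M j k a = M j' k' a -> j = j' /\ k = k'.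
Proof.
move=> H a j k j' k' e. have [_ _ h1] := H a (M j k a).
have := rb_inj (x := (j,k)) (y := (j',k')) h1. rewrite !inE /= e eqxx => /(_ erefl erefl). by case.
Qed.

Lemma Lnat_lt m n (Hm : 0 < m) (M : cube m) i j k : 2 * m <= n -> i < n -> j < n -> k < n ->
  Lnat n Hm M i j k < n ^ 2.
Proof.
move=> hn hi hj hk; have [F1 _ _ _ _] := Fn_facts Hm hn.
rewrite /Lnat; case: ifP => _.
- apply: fnat_lt => //; lia.
- exact: (code_lt (F1 _ _ hi hj) (F1 _ _ hi hk)).
Qed.

Lemma fnat_parts m n s : 0 < m -> m <= n -> s < m ^ 2 ->
  exists x y, [/\ fnat m n s = x * n + y, x < m & y < m].
Proof.
move=> hm hmn hs; have [d1 d2] := fnat_dec hm hs.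
by exists (s %/ m), (s %% m).
Qed.

Ltac Lcase Hm hn HM c1 c2 :=
  case: (boolP (_ && _ && _)) => c1; case: (boolP (_ && _ && _)) => c2;
  rewrite ?c1 ?c2 ?(negbTE c1) ?(negbTE c2).

Lemma Lnat_inj m n (Hm : 0 < m) (M : cube m) (HM : layer_rainbow M) i j k i' j' k' :
  2*m <= n -> i < n -> j < n -> k < n -> i' < n -> j' < n -> k' < n ->
  Lnat n Hm M i j k = Lnat n Hm M i' j' k' ->
  (i = i' -> j = j' /\ k = k') /\ (j = j' -> i = i' /\ k = k') /\ (k = k' -> i = i' /\ j = j').
Proof.
move=> hn hi hj hk hi' hj' hk'.
have [F1 Frow Fcol FAB FBA] := Fn_facts Hm hn.
have hmn : m <= n by lia.
rewrite /Lnat.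
case: (boolP ((i < m) && (j < m) && (k < m))) => c1;
case: (boolP ((i' < m) && (j' < m) && (k' < m))) => c2.
- move/(fnat_inj Hm hmn (ltn_ord _) (ltn_ord _))/val_inj => e.
  case/andP: c1 => /andP [c1i c1j] c1k; case/andP: c2 => /andP [c2i c2j] c2k.
  split; [|split] => ee.
  + have : castm Hm i = castm Hm i' by apply: val_inj; rewrite !castmK // ee.
    move=> ee'; rewrite ee' in e; have [e1 e2] := M_inj1 HM e.
    move: (congr1 val e1) (congr1 val e2); rewrite !castmK //.
  + have : castm Hm j = castm Hm j' by apply: val_inj; rewrite !castmK // ee.
    move=> ee'; rewrite ee' in e; have [e1 e2] := M_inj2 HM e.
    move: (congr1 val e1) (congr1 val e2); rewrite !castmK //.
  + have : castm Hm k = castm Hm k' by apply: val_inj; rewrite !castmK // ee.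
    move=> ee'; rewrite ee' in e; have [e1 e2] := M_inj3 HM e.
    move: (congr1 val e1) (congr1 val e2); rewrite !castmK //.
- have [x [y [-> hx hy]]] := fnat_parts Hm hmn (ltn_ord (M (castm Hm i) (castm Hm j) (castm Hm k))).
  move=> e; have hy' : y < n by lia. have [e1 e2] := decode hy' (F1 i' k' hi' hk') e.
  have := FAB i' j'; have := FAB i' k'; have := FBA i' j'; have := FBA i' k'; lia.
- have [x [y [-> hx hy]]] := fnat_parts Hm hmn (ltn_ord (M (castm Hm i') (castm Hm j') (castm Hm k'))).
  move=> e; have hy' : y < n by lia. have [e1 e2] := decode (F1 i k hi hk) hy' e.
  have := FAB i j; have := FAB i k; have := FBA i j; have := FBA i k; lia.
- move=> e; have [e1 e2] := decode (F1 i k hi hk) (F1 i' k' hi' hk') e.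
  split; [|split] => ee.
  + rewrite -ee in e1 e2; split; [exact: (Frow i j j' hi hj hj' e1)| exact: (Frow i k k' hi hk hk' e2)].
  + rewrite -ee in e1; have ei := Fcol i i' j hi hi' hj e1; rewrite -ei in e2; split => //; exact: (Frow i k k' hi hk hk' e2).
  + rewrite -ee in e2; have ei := Fcol i i' k hi hi' hk e2; rewrite -ei in e1; split => //; exact: (Frow i j j' hi hj hj' e1).
Qed.

Lemma suff_dir m n (M : cube m) : 0 < m -> layer_rainbow M -> 2 * m <= n -> extendable n M.
Proof.
move=> Hm HM hn.
have Hn : 0 < n ^ 2 by rewrite expn_gt0; lia.
have hmn : m <= n by lia.
have Lval : forall i j k : 'I_n, val (Lc Hm Hn M i j k) = Lnat n Hm M i j k.
  by move=> i j k; rewrite /Lc val_insubd Lnat_lt.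
exists (Lc Hm Hn M); split.
- move=> a s; split; apply: inj_rb => -[j k] [j' k'] /= /(congr1 val); rewrite !Lval;
  move/(Lnat_inj HM hn (ltn_ord _) (ltn_ord _) (ltn_ord _) (ltn_ord _) (ltn_ord _) (ltn_ord _)).
  + by case=> /(_ erefl) [/val_inj -> /val_inj ->].
  + by case=> _ [/(_ erefl) [/val_inj -> /val_inj ->]].
  + by case=> _ [_ /(_ erefl) [/val_inj -> /val_inj ->]].
- exists (fun s => insubd (Ordinal Hn) (fnat m n s)); split.
  + move=> s s' /(congr1 val); rewrite !val_insubd !fnat_lt //.
    by move/(fnat_inj Hm hmn (ltn_ord _) (ltn_ord _))/val_inj.
  + move=> i j k i' j' k' ei ej ek; apply: val_inj; rewrite Lval val_insubd fnat_lt //.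
    rewrite /Lnat -ei -ej -ek !ltn_ord /= !castmV.
    by [].
Qed.

Lemma nec_dir m n (M : cube m) : 0 < m -> m < n -> layer_rainbow M -> extendable n M -> 2 * m <= n.
Proof.
move=> Hm hmn HM [L [HL [f [finj Hf]]]].
rewrite leqNgt; apply/negP => hlt.
pose a : 'I_n := Ordinal hmn.
pose pos (s : 'I_(m^2)) := odflt (a, a) [pick p : 'I_n * 'I_n | L a p.1 p.2 == f s].
have Hpos : forall s, L a (pos s).1 (pos s).2 = f s.
  move=> s; rewrite /pos; case: pickP => [p /eqP // | H].
  have [h1 _ _] := HL a (f s); have [z hz] := mem_card1 h1.
  have := H z; have := hz z; rewrite !inE eqxx => -> //.
have Hge : forall s, m <= (pos s).1 /\ m <= (pos s).2.
  move=> s; split; rewrite leqNgt; apply/negP => hl.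
  - pose jm : 'I_m := Ordinal hl.
    have [_ h1 _] := HM jm s; have [[i0 k0] hz] := mem_card1 h1.
    have : (i0, k0) \in [set p | M p.1 jm p.2 == s] by rewrite hz inE.
    rewrite inE /= => /eqP e.
    have e2 := Hf i0 jm k0 (widen_ord (ltnW hmn) i0) (pos s).1 (widen_ord (ltnW hmn) k0) erefl erefl erefl.
    rewrite e in e2.
    have [_ h2 _] := HL (pos s).1 (f s).
    have := rb_inj (x := (widen_ord (ltnW hmn) i0, widen_ord (ltnW hmn) k0)) (y := (a, (pos s).2)) h2.
    rewrite !inE /= e2 Hpos eqxx => /(_ erefl erefl) [] ei _.
    have := ltn_ord i0; lia.
  - pose km : 'I_m := Ordinal hl.
    have [_ _ h1] := HM km s; have [[i0 j0] hz] := mem_card1 h1.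
    have : (i0, j0) \in [set p | M p.1 p.2 km == s] by rewrite hz inE.
    rewrite inE /= => /eqP e.
    have e2 := Hf i0 j0 km (widen_ord (ltnW hmn) i0) (widen_ord (ltnW hmn) j0) (pos s).2 erefl erefl erefl.
    rewrite e in e2.
    have [_ _ h2] := HL (pos s).2 (f s).
    have := rb_inj (x := (widen_ord (ltnW hmn) i0, widen_ord (ltnW hmn) j0)) (y := (a, (pos s).1)) h2.
    rewrite !inE /= e2 Hpos eqxx => /(_ erefl erefl) [] ei _.
    have := ltn_ord i0; lia.
pose h (s : 'I_(m^2)) : 'I_(n - m) * 'I_(n - m) :=
  (Ordinal (ltn_sub2r hmn (ltn_ord (pos s).1)), Ordinal (ltn_sub2r hmn (ltn_ord (pos s).2))).
have hinj : injective h.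
  move=> s s' [] e1 e2.
  have [g1 g2] := Hge s; have [g1' g2'] := Hge s'.
  have ep : pos s = pos s'.
    case E1: (pos s) => [p1 p2]; case E2: (pos s') => [p1' p2'].
    rewrite E1 E2 /= in e1 e2 g1 g2 g1' g2'.
    congr pair; apply: ord_inj; lia.
  apply: finj; by rewrite -!Hpos ep.
have := leq_card h hinj; rewrite card_prod !card_ord -mulnn.
nia.
Qed.

Theorem theorem1 (m n : nat) : 0 < m -> m < n ->
  forall M : cube m, layer_rainbow M ->
    (extendable n M <-> 2 * m <= n).
Proof.
move=> Hm hmn M HM; split.
- exact: nec_dir.
- exact: suff_dir.
Qed.
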